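(* Let $j,k\ge 1$ be integers, $\beta,\gamma,\nu>0$, $R_0=\beta/\gamma>1$. For $\boldsymbol{y},\boldsymbol{\theta}\in\mathbb{R}^{j+k}$ define $$H_{j,k}(\boldsymbol{y},\boldsymbol{\theta})=\beta\Big(\sum_{m=j+1}^{j+k}y_m\Big)\Big(1-\sum_{m=1}^{j+k}y_m\Big)\big(e^{\theta_1}-1\big)+j\nu\sum_{m=1}^{j}y_m\big(e^{-\theta_m+\theta_{m+1}}-1\big)+k\gamma\sum_{m=j+1}^{j+k-1}y_m\big(e^{-\theta_m+\theta_{m+1}}-1\big)+k\gamma\,y_{j+k}\big(e^{-\theta_{j+k}}-1\big).$$ Define $\tilde S(\boldsymbol{\theta})=\ln\Big(\frac1k\sum_{m=j+1}^{j+k}e^{\theta_m}\Big)-\frac{\gamma}{\beta}\Big(1-\frac{k}{\sum_{m=j+1}^{j+k}e^{\theta_m}}\Big)$ (a function of $\theta_{j+1},\dots,\theta_{j+k}$ only). Let $\theta_k^*$ be the unique real solution of $\frac{\beta}{k\gamma}\sum_{m=1}^k e^{m\theta}=1$ and let $\boldsymbol{\theta}^*\in\mathbb{R}^{j+k}$ have $\theta^*_1=\dots=\theta^*_{j+1}=k\theta_k^*$ and $\theta^*_{j+i}=(k-i+1)\theta_k^*$ for $i=1,\dots,k$. Then: (i) for every $\boldsymbol{\theta}\in\mathbb{R}^{j+k}$ with $\theta_1=\theta_2=\cdots=\theta_{j+1}$, $H_{j,k}\big(\nabla\tilde S(\boldsymbol{\theta}),\boldsymbol{\theta}\big)=0$;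 (ii) $(\mathbf{0},\boldsymbol{\theta}^* )$ is an equilibrium point of the Hamiltonian system $dy_i/dt=\partial H_{j,k}/\partial\theta_i$, $d\theta_i/dt=-\partial H_{j,k}/\partial y_i$ ($i=1,\dots,j+k$); (iii) $\tilde S(\boldsymbol{\theta}^* )-\tilde S(\mathbf{0})=1-\frac1{R_0}-\ln R_0$.
   Context: $H_{j,k}$ is the Hamiltonian for an SEIS infection model with $j$ latent stages (each of mean duration $1/(j\nu)$) followed by $k$ infectious stages (each of mean duration $1/(k\gamma)$); $y_1,\dots,y_j$ correspond to latent stages and $y_{j+1},\dots,y_{j+k}$ to infectious stages, and $\theta_i$ is the momentum conjugate to $y_i$. $\nabla\tilde S$ denotes the gradient with respect to all $j+k$ components of $\boldsymbol\theta$. *)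

(* Defs.v *)
(* classical reals. Vectors in R^{j+k} are represented as
   functions nat -> R, using (1-based) indices 1..j+k; other indices unused. *)
From Stdlib Require Import Reals Lra Lia.
Open Scope R_scope.

Fixpoint sumR (n : nat) (f : nat -> R) : R :=
  match n with
  | O => 0
  | S n' => sumR n' f + f n'
  end.

(* ssum a b f = sum_{m=a}^{b} f m  (empty, i.e. 0, when b < a) *)
Definition ssum (a b : nat) (f : nat -> R) : R :=
  sumR (S b - a) (fun i => f (a + i)%nat).

Definition upd (f : nat -> R) (i : nat) (t : R) : nat -> R :=
  fun m => if Nat.eqb m i then t else f m.

Definition Ham (j k : nat) (beta gamma nu : R) (y th : nat -> R) : R :=
  beta * ssum (j + 1) (j + k) y * (1 - ssum 1 (j + k) y) * (exp (th 1%nat) - 1)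
  + INR j * nu * ssum 1 j (fun m => y m * (exp (- th m + th (m + 1)%nat) - 1))
  + INR k * gamma * ssum (j + 1) (j + k - 1)
                       (fun m => y m * (exp (- th m + th (m + 1)%nat) - 1))
  + INR k * gamma * y (j + k)%nat * (exp (- th (j + k)%nat) - 1).

Definition Stilde (j k : nat) (beta gamma : R) (th : nat -> R) : R :=
  ln (/ INR k * ssum (j + 1) (j + k) (fun m => exp (th m)))
  - gamma / beta * (1 - INR k / ssum (j + 1) (j + k) (fun m => exp (th m))).

(* theta^* built from theta_k^* = ts:
   theta^*_m = k ts for 1 <= m <= j+1, theta^*_{j+i} = (k-i+1) ts. *)
Definition theta_star (j k : nat) (ts : R) : nat -> R :=
  fun m => if Nat.leb m (j + 1) then INR k * ts else INR (j + k + 1 - m) * ts.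

(* Main.v *)
Require Import Defs.
From Stdlib Require Import Reals.
Open Scope R_scope.
From Stdlib Require Import Lra Lia.
From Coquelicot Require Import Coquelicot.
Open Scope R_scope.

Lemma sumR_ext n f g : (forall i, (i < n)%nat -> f i = g i) -> sumR n f = sumR n g.
Proof. induction n; simpl; intros H; auto. rewrite IHn by (intros; apply H; lia). rewrite H by lia. auto. Qed.

Lemma sumR_zero n : sumR n (fun _ => 0) = 0.
Proof. induction n; simpl; auto. rewrite IHn; ring. Qed.

Lemma sumR_scal n c f : sumR n (fun i => c * f i) = c * sumR n f.
Proof. induction n; simpl. ring. rewrite IHn; ring. Qed.

Lemma sumR_split n m f : sumR (n + m) f = sumR n f + sumR m (fun i => f (n + i)%nat).
Proof. induction m; simpl. rewrite Nat.add_0_r; ring. rewrite Nat.add_succ_r; simpl. rewrite IHm; ring. Qed.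

Lemma sumR_tele n g : sumR n (fun i => g (S i) - g i) = g n - g O.
Proof. induction n; simpl. ring. rewrite IHn; ring. Qed.

Lemma sumR_const1 n : sumR n (fun _ => 1) = INR n.
Proof. induction n; simpl sumR. simpl; ring. rewrite IHn, S_INR; ring. Qed.

Lemma sumR_pos n f : (0 < n)%nat -> (forall i, 0 < f i) -> 0 < sumR n f.
Proof. induction n; intros Hn Hf. lia. simpl. destruct n. simpl. specialize (Hf O); lra.
 specialize (IHn ltac:(lia) Hf). specialize (Hf (S n)). lra. Qed.

Lemma sumR_upd n f p v : (p < n)%nat ->
  sumR n (fun i => if Nat.eqb i p then v else f i) = sumR n f - f p + v.
Proof. induction n; intros Hp. lia. simpl.
 destruct (Nat.eq_dec p n) as [->|Hne].
 - rewrite Nat.eqb_refl. rewrite (sumR_ext n _ f). ring.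
   intros i Hi. destruct (Nat.eqb_spec i n); [lia|auto].
 - rewrite IHn by lia. destruct (Nat.eqb_spec n p); [lia|]. ring. Qed.

Lemma sum_single n f p : (forall l, (l < n)%nat -> l <> p -> f l = 0) ->
  sumR n f = if Nat.ltb p n then f p else 0.
Proof. induction n; intros H. simpl. destruct (Nat.ltb_spec p 0); [lia|auto].
 simpl. rewrite IHn by (intros; apply H; lia).
 destruct (Nat.ltb_spec p n); destruct (Nat.ltb_spec p (S n)); try lia.
 - rewrite (H n) by lia; ring.
 - replace p with n by lia; ring.
 - rewrite (H n) by lia; ring. Qed.

Lemma sumR_rev n f : sumR n f = sumR n (fun i => f (n - S i)%nat).
Proof. revert f; induction n; intros f. reflexivity.
 change (S n) with (1 + n)%nat at 1. rewrite sumR_split. rewrite IHn.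
 simpl sumR at 3. replace (n - n)%nat with O by lia.
 simpl sumR at 1. rewrite (sumR_ext n (fun i => f (1 + (n - S i))%nat) (fun i => f (n - i)%nat)). ring.
 intros i Hi. f_equal. lia. Qed.

Lemma ssum_split a b c f : (a <= b + 1)%nat -> (b <= c)%nat ->
  ssum a c f = ssum a b f + ssum (b + 1) c f.
Proof. intros H1 H2. unfold ssum.
 replace (S c - a)%nat with ((S b - a) + (S c - (b+1)))%nat by lia.
 rewrite sumR_split. f_equal. apply sumR_ext. intros; f_equal; lia. Qed.

Lemma ssum_tele a b g : (a <= b + 1)%nat ->
  ssum a b (fun m => g (m + 1)%nat - g m) = g (b + 1)%nat - g a.
Proof. intros H. unfold ssum.
 pose proof (sumR_tele (S b - a) (fun l => g (a + l)%nat)) as T. cbv beta in T.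
 replace (g (b+1)%nat - g a) with (g (a + (S b - a))%nat - g (a + 0)%nat) by (f_equal; f_equal; lia).
 rewrite <- T. apply sumR_ext. intros; f_equal; f_equal; lia. Qed.

Lemma ssum_ext a b f g : (forall m, (a <= m <= b)%nat -> f m = g m) -> ssum a b f = ssum a b g.
Proof. intros H; unfold ssum; apply sumR_ext; intros; apply H; lia. Qed.

Lemma dpl_const_ext f c x : (forall t, f t = c) -> derivable_pt_lim f x 0.
Proof. intros H eps He. exists (mkposreal eps He). intros h Hh _.
 rewrite !H. replace ((c - c) / h - 0) with 0 by (field; auto). rewrite Rabs_R0; auto. Qed.

Lemma ssum_single a b i (F : nat -> R) : (forall m, m <> i -> F m = 0) ->
  ssum a b F = if (Nat.leb a i && Nat.leb i b)%bool then F i else 0.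
Proof. intros H. unfold ssum. rewrite (sum_single _ _ (i - a)).
 - destruct (Nat.leb_spec a i); destruct (Nat.leb_spec i b); destruct (Nat.ltb_spec (i - a) (S b - a));
   simpl; try lia; auto.
   + f_equal; lia.
   + apply H; lia.
 - intros l Hl Hne. apply H. lia. Qed.

Lemma ssum_zero a b : ssum a b (fun _ => 0) = 0.
Proof. unfold ssum; apply sumR_zero. Qed.

Lemma ssum_scal a b c f : ssum a b (fun m => c * f m) = c * ssum a b f.
Proof. unfold ssum; apply sumR_scal. Qed.

Lemma Ham_y0 j k beta gamma nu th : Ham j k beta gamma nu (fun _ => 0) th = 0.
Proof. unfold Ham. rewrite ssum_zero.
 rewrite (ssum_ext 1 j _ (fun _ => 0)) by (intros; ring).
 rewrite (ssum_ext (j+1) (j+k-1) _ (fun _ => 0)) by (intros; ring).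
 rewrite !ssum_zero. ring. Qed.

Lemma key_identity k beta gamma ts (hk : (1 <= k)%nat) (hb : 0 < beta) (hg : 0 < gamma)
  (hts : beta / (INR k * gamma) * ssum 1 k (fun m => exp (INR m * ts)) = 1) :
  beta * (exp (INR k * ts) - 1) + INR k * gamma * (exp (- ts) - 1) = 0.
Proof.
  assert (Hk : 0 < INR k) by (apply lt_0_INR; lia).
  set (Sm := ssum 1 k (fun m => exp (INR m * ts))).
  assert (E1 : INR k * gamma = beta * Sm).
  { unfold Sm. rewrite <- (Rmult_1_r (INR k * gamma)), <- hts. field. lra. }
  set (g := fun m : nat => exp (INR (m - 1) * ts)).
  assert (T := ssum_tele 1 k g ltac:(lia)).
  rewrite (ssum_ext 1 k _ (fun m => (- (exp (- ts) - 1)) * exp (INR m * ts))) in T.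
  2:{ intros m Hm. unfold g. replace (m + 1 - 1)%nat with m by lia.
      assert (Hm' : INR m = INR (m - 1) + 1) by (rewrite <- S_INR; f_equal; lia).
      rewrite Hm', Rmult_plus_distr_r, Rmult_1_l, exp_plus, exp_Ropp.
      field. apply Rgt_not_eq, exp_pos. }
  rewrite ssum_scal in T. fold Sm in T. unfold g in T.
  replace (k + 1 - 1)%nat with k in T by lia. replace (1 - 1)%nat with O in T by lia.
  simpl INR in T. rewrite Rmult_0_l, exp_0 in T.
  rewrite E1. nra.
Qed.

Lemma theta_star_inf j k ts i : (j + 1 <= i)%nat -> theta_star j k ts i = INR (j + k + 1 - i) * ts.
Proof. intros H. unfold theta_star. destruct (Nat.leb_spec i (j+1)); auto.
 f_equal. f_equal. lia. Qed.

Lemma part2 (j k : nat) (beta gamma nu : R)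
  (hj : (1 <= j)%nat) (hk : (1 <= k)%nat)
  (hb : 0 < beta) (hg : 0 < gamma) (ts : R)
  (hts : beta / (INR k * gamma) * ssum 1 k (fun m => exp (INR m * ts)) = 1) :
  (forall i, (1 <= i <= j + k)%nat ->
     derivable_pt_lim
       (fun t => Ham j k beta gamma nu (upd (fun _ => 0) i t) (theta_star j k ts)) 0 0
     /\
     derivable_pt_lim
       (fun t => Ham j k beta gamma nu (fun _ => 0) (upd (theta_star j k ts) i t))
       (theta_star j k ts i) 0).
Proof.
  intros i Hi. split.
  2:{ apply (dpl_const_ext _ 0). intros; apply Ham_y0. }
  assert (Hu : forall t m, m <> i -> upd (fun _ => 0) i t m = 0).
  { intros t m Hm. unfold upd. destruct (Nat.eqb_spec m i); [lia|auto]. }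
  assert (Hui : forall t, upd (fun _ => 0) i t i = t).
  { intros t. unfold upd. rewrite Nat.eqb_refl. auto. }
  assert (Hs : forall t a b (h : nat -> R), ssum a b (fun m => upd (fun _ => 0) i t m * h m)
             = if (Nat.leb a i && Nat.leb i b)%bool then t * h i else 0).
  { intros t a b h. rewrite (ssum_single a b i); [rewrite Hui; auto|].
    intros m Hm. rewrite (Hu t m) by auto. ring. }
  assert (Hs1 : forall t a b, ssum a b (upd (fun _ => 0) i t)
             = if (Nat.leb a i && Nat.leb i b)%bool then t else 0).
  { intros t a b. rewrite (ssum_single a b i); [rewrite Hui; auto|]. intros; apply Hu; auto. }
  assert (Th1 : theta_star j k ts 1 = INR k * ts).
  { unfold theta_star. destruct (Nat.leb_spec 1 (j+1)); [auto|lia]. }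
  destruct (Nat.le_gt_cases i j) as [Hij | Hij].
  -
    apply (dpl_const_ext _ 0). intros t. unfold Ham.
    rewrite !Hs1, !Hs. rewrite (Hu t (j+k)%nat) by lia.
    destruct (Nat.leb_spec (j+1) i); [lia|]. simpl andb.
    destruct (Nat.leb_spec 1 i); [|lia]. destruct (Nat.leb_spec i j); [|lia]. simpl andb.
    unfold theta_star. destruct (Nat.leb_spec i (j+1)); [|lia].
    destruct (Nat.leb_spec (i+1) (j+1)); [|lia].
    replace (- (INR k * ts) + INR k * ts) with 0 by ring. rewrite exp_0. repeat match goal with |- context [if ?b then _ else _] => destruct b end; ring.
  -
    set (E := exp (INR k * ts)). set (K := INR k * gamma).
    assert (Hf : forall t, Ham j k beta gamma nu (upd (fun _ => 0) i t) (theta_star j k ts)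
                   = beta * t * (1 - t) * (E - 1) + K * t * (exp (- ts) - 1)).
    { intros t. unfold Ham. rewrite !Hs1, !Hs, Th1. fold E. fold K.
      destruct (Nat.leb_spec (j+1) i); [|lia]. destruct (Nat.leb_spec i (j+k)); [|lia].
      destruct (Nat.leb_spec 1 i); [|lia]. destruct (Nat.leb_spec i j); [lia|]. simpl andb.
      destruct (Nat.leb_spec i (j + k - 1)).
      + rewrite (Hu t (j+k)%nat) by lia. rewrite !theta_star_inf by lia.
        replace (j + k + 1 - i)%nat with (S (j + k + 1 - (i + 1))) by lia.
        rewrite S_INR. replace (- ((INR (j + k + 1 - (i + 1)) + 1) * ts) + INR (j + k + 1 - (i + 1)) * ts)
          with (- ts) by ring. ring.
      + replace (upd (fun _ => 0) i t (j + k)%nat) with t by (unfold upd; destruct (Nat.eqb_spec (j+k) i); [auto|lia]). rewrite theta_star_inf by lia.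
        replace (j + k + 1 - (j + k))%nat with 1%nat by lia. simpl INR. rewrite Rmult_1_l. ring. }
    apply is_derive_Reals. eapply is_derive_ext. intros t. symmetry. apply Hf.
    replace 0 with (beta * (E - 1) + K * (exp (- ts) - 1)) at 2.
    + auto_derive; auto. ring.
    + unfold E, K. apply key_identity; auto.
Qed.

Lemma part1 (j k : nat) (beta gamma nu : R)
  (hj : (1 <= j)%nat) (hk : (1 <= k)%nat)
  (hb : 0 < beta) (hg : 0 < gamma) (th y : nat -> R)
  (hth : forall m, (1 <= m <= j + 1)%nat -> th m = th 1%nat)
  (hy : forall i, (1 <= i <= j + k)%nat ->
        derivable_pt_lim (fun t => Stilde j k beta gamma (upd th i t)) (th i) (y i)) :
  Ham j k beta gamma nu y th = 0.
Proof.
  assert (Hk : 0 < INR k) by (apply lt_0_INR; lia).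
  set (A := ssum (j+1) (j+k) (fun m => exp (th m))).
  assert (HA : 0 < A).
  { unfold A, ssum. apply sumR_pos. lia. intros; apply exp_pos. }
  assert (Hout : forall i t, (i < j + 1)%nat ->
     ssum (j+1) (j+k) (fun m => exp (upd th i t m)) = A).
  { intros i t Hi. apply ssum_ext. intros m Hm. unfold upd.
    destruct (Nat.eqb_spec m i); [lia|auto]. }
  assert (Hin : forall i t, (j + 1 <= i <= j + k)%nat ->
     ssum (j+1) (j+k) (fun m => exp (upd th i t m)) = A - exp (th i) + exp t).
  { intros i t Hi. unfold A, ssum.
    rewrite (sumR_ext _ _ (fun l => if Nat.eqb l (i - (j+1)) then exp t else exp (th (j + 1 + l)%nat))).
    - rewrite sumR_upd by lia. replace (j + 1 + (i - (j + 1)))%nat with i by lia. ring.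
    - intros l Hl. unfold upd. destruct (Nat.eqb_spec (j + 1 + l) i); destruct (Nat.eqb_spec l (i - (j+1)));
      try lia; subst; auto. }
  set (c := 1 - gamma * INR k / (beta * A)).
  assert (Y0 : forall i, (1 <= i <= j)%nat -> y i = 0).
  { intros i Hi. apply (uniqueness_limite _ _ _ _ (hy i ltac:(lia))).
    apply (dpl_const_ext _ (Stilde j k beta gamma th)). intros t. unfold Stilde.
    rewrite Hout by lia. reflexivity. }
  assert (Y1 : forall i, (j + 1 <= i <= j + k)%nat -> y i = c * exp (th i) / A).
  { intros i Hi. apply (uniqueness_limite _ _ _ _ (hy i ltac:(lia))).
    apply is_derive_Reals.
    eapply is_derive_ext. intros t. unfold Stilde. rewrite (Hin i t Hi). reflexivity.
    auto_derive.
    - replace (A - exp (th i) + exp (th i)) with A by ring. split; [|split; auto].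
      apply Rmult_lt_0_compat; [apply Rinv_0_lt_compat|]; lra.
      apply Rgt_not_eq; lra.
    - replace (A - exp (th i) + exp (th i)) with A by ring. unfold c. field. split; lra. }
  assert (Hsy : ssum (j+1) (j+k) y = c / A * A).
  { rewrite (ssum_ext _ _ y (fun m => c / A * exp (th m))).
    rewrite ssum_scal. reflexivity. intros m Hm. rewrite Y1 by lia. field. lra. }
  unfold Ham. rewrite (ssum_split 1 j (j+k)) by lia.
  rewrite (ssum_ext 1 j y (fun _ => 0)) by (intros; apply Y0; lia).
  rewrite (ssum_ext 1 j (fun m => y m * (exp (- th m + th (m + 1)%nat) - 1)) (fun _ => 0)) by (intros m Hm; rewrite Y0 by lia; ring).
  rewrite ssum_zero, Hsy.
  rewrite (ssum_ext (j+1) (j+k-1) _ (fun m => c / A * (exp (th (m + 1)%nat) - exp (th m)))).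
  2:{ intros m Hm. rewrite Y1 by lia. rewrite exp_plus, exp_Ropp. field. split; [lra|].
      apply Rgt_not_eq, exp_pos. }
  rewrite ssum_scal. pose proof (ssum_tele (j+1) (j+k-1) (fun m => exp (th m)) ltac:(lia)) as T. cbv beta in T. rewrite T.
  replace (j + k - 1 + 1)%nat with (j + k)%nat by lia.
  rewrite (hth (j+1)%nat) by lia.
  rewrite (Y1 (j+k)%nat) by lia. rewrite exp_Ropp. unfold c.
  field. split; [apply Rgt_not_eq, exp_pos|]. split; lra.
Qed.

Lemma part3 (j k : nat) (beta gamma : R)
  (hk : (1 <= k)%nat) (hb : 0 < beta) (hg : 0 < gamma) (ts : R)
  (hts : beta / (INR k * gamma) * ssum 1 k (fun m => exp (INR m * ts)) = 1) :
  Stilde j k beta gamma (theta_star j k ts) - Stilde j k beta gamma (fun _ => 0)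
    = 1 - 1 / (beta / gamma) - ln (beta / gamma).
Proof.
  assert (Hk : 0 < INR k) by (apply lt_0_INR; lia).
  assert (E1 : ssum 1 k (fun m => exp (INR m * ts)) = INR k * gamma / beta).
  { apply (Rmult_eq_reg_l (beta / (INR k * gamma))). rewrite hts. field. lra.
    apply Rgt_not_eq. apply Rdiv_lt_0_compat; [lra|nra]. }
  assert (E2 : ssum (j+1) (j+k) (fun m => exp (theta_star j k ts m)) = INR k * gamma / beta).
  { rewrite <- E1. unfold ssum. replace (S (j+k) - (j+1))%nat with k by lia.
    replace (S k - 1)%nat with k by lia. rewrite (sumR_rev k (fun i => exp (INR (1 + i) * ts))).
    apply sumR_ext. intros l Hl. unfold theta_star. f_equal. f_equal.
    destruct (Nat.leb_spec (j + 1 + l) (j + 1)); f_equal; f_equal; lia. }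
  assert (E3 : ssum (j+1) (j+k) (fun m => exp ((fun _ => 0) m)) = INR k).
  { unfold ssum. replace (S (j+k) - (j+1))%nat with k by lia. rewrite exp_0. apply sumR_const1. }
  unfold Stilde. rewrite E2, E3.
  replace (/ INR k * (INR k * gamma / beta)) with (/ (beta / gamma)) by (field; lra).
  rewrite ln_Rinv by (apply Rdiv_lt_0_compat; lra).
  rewrite Rinv_l by lra. rewrite ln_1. field. lra.
Qed.

Theorem mainTheorem3 (j k : nat) (beta gamma nu : R)
  (hj : (1 <= j)%nat) (hk : (1 <= k)%nat)
  (hb : 0 < beta) (hg : 0 < gamma) (hn : 0 < nu) (hR0 : 1 < beta / gamma)
  (ts : R)
  (hts : beta / (INR k * gamma) * ssum 1 k (fun m => exp (INR m * ts)) = 1) :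
  (* (i): y = grad Stilde(theta) (all partial derivatives) gives H = 0 *)
  (forall (th y : nat -> R),
     (forall m, (1 <= m <= j + 1)%nat -> th m = th 1%nat) ->
     (forall i, (1 <= i <= j + k)%nat ->
        derivable_pt_lim (fun t => Stilde j k beta gamma (upd th i t)) (th i) (y i)) ->
     Ham j k beta gamma nu y th = 0)
  /\
  (* (ii): (0, theta^* ) is an equilibrium: all partials of H vanish there *)
  (forall i, (1 <= i <= j + k)%nat ->
     derivable_pt_lim
       (fun t => Ham j k beta gamma nu (upd (fun _ => 0) i t) (theta_star j k ts)) 0 0
     /\
     derivable_pt_lim
       (fun t => Ham j k beta gamma nu (fun _ => 0) (upd (theta_star j k ts) i t))
       (theta_star j k ts i) 0)
  /\
  (* (iii) *)
  Stilde j k beta gamma (theta_star j k ts) - Stilde j k beta gamma (fun _ => 0)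
    = 1 - 1 / (beta / gamma) - ln (beta / gamma).
Proof.
  split; [|split].
  - intros th y hth hy. eapply part1; eauto.
  - apply part2; auto.
  - apply part3; auto.
Qed.
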